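(* If $r$ is a nonzero integer and $n$ is a positive integer, then \[ 5F_r^2 \;\Big|\; (-1)^{r+1}F_{2r(n+1)}+(-1)^{r(n+1)}F_{2r}+F_{2rn}. \]
   Context: $F_n$ denotes the Fibonacci numbers, defined for all integers $n$ by $F_0=0,F_1=1$, $F_n=F_{n-1}+F_{n-2}$, with $F_{-n}=(-1)^{n-1}F_n$. *)

(* Defs.v *)
From Stdlib Require Import ZArith.
Open Scope Z_scope.

Fixpoint fib_nat (n : nat) : Z :=
  match n with
  | O => 0
  | S m => match m with
           | O => 1
           | S k => fib_nat m + fib_nat k
           end
  end.

(* (-1)^k for an integer exponent k (well defined since (-1)^{-1} = -1). *)
Definition sgn_pow (k : Z) : Z := if Z.even k then 1 else -1.

Definition fib (n : Z) : Z :=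
  if 0 <=? n then fib_nat (Z.to_nat n)
  else sgn_pow (- n - 1) * fib_nat (Z.to_nat (- n)).

(* Main.v *)
Require Import Defs.
From Stdlib Require Import ZArith Lia.
Open Scope Z_scope.

Notation F := fib_nat.

Lemma F_SS k : F (S (S k)) = F (S k) + F k.
Proof. reflexivity. Qed.

Lemma F_add a b : F (a + b + 1) = F (a + 1) * F (b + 1) + F a * F b.
Proof.
  revert b; induction a as [|a IH]; intro b.
  - rewrite Nat.add_0_l. change (F (0+1)%nat) with 1. change (F 0) with 0. ring.
  - replace (S a + b + 1)%nat with (a + S b + 1)%nat by lia.
    rewrite IH.
    replace (S b + 1)%nat with (S (S b)) by lia.
    replace (S a + 1)%nat with (S (S a)) by lia.
    replace (a + 1)%nat with (S a) by lia.
    replace (b + 1)%nat with (S b) by lia.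
    rewrite !F_SS. ring.
Qed.

Definition pw (k : nat) : Z := (-1) ^ (Z.of_nat k).

Lemma pw_S k : pw (S k) = - pw k.
Proof. unfold pw. rewrite Nat2Z.inj_succ, Z.pow_succ_r by lia. ring. Qed.

Lemma pw_add a b : pw (a + b) = pw a * pw b.
Proof. unfold pw. rewrite Nat2Z.inj_add, Z.pow_add_r by lia. ring. Qed.

Lemma pw_double k : pw (k + k) = 1.
Proof. induction k as [|k IH]. reflexivity.
  replace (S k + S k)%nat with (S (S (k + k))) by lia. rewrite !pw_S, IH. ring. Qed.

Lemma pw_sq k : pw k * pw k = 1.
Proof. rewrite <- pw_add. apply pw_double. Qed.

Lemma cassini k : F (k + 2) * F k - F (k + 1) ^ 2 = pw (k + 1).
Proof.
  induction k as [|k IH].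
  - reflexivity.
  - replace (S k + 2)%nat with (S (S (k + 1))) by lia.
    replace (S k + 1)%nat with (S (k + 1)) by lia.
    rewrite pw_S, <- IH.
    replace (S (k + 1)) with (k + 2)%nat by lia.
    replace (k + 2)%nat with (S (S k)) by lia.
    replace (k + 1)%nat with (S k) by lia.
    rewrite !F_SS. ring.
Qed.

Lemma step q p' : pw (p' + 1) = 1 ->
  F (q + 2 * S p') + F q = (F p' + F (S (S p'))) * F (q + S p').
Proof.
  intro He.
  pose proof (cassini p') as C. rewrite He in C.
  assert (A1 : F (q + S p') = F (q + 1) * F (p' + 1) + F q * F p').
  { rewrite <- F_add. f_equal; lia. }
  assert (A2 : F (q + S p' + 1) = F (q + 1) * F (p' + 2) + F q * F (p' + 1)).
  { replace (p' + 2)%nat with (S p' + 1)%nat by lia. replace (p' + 1)%nat with (S p') by lia. exact (F_add q (S p')). }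
  assert (A3 : F (q + 2 * S p') = F (q + S p' + 1) * F (p' + 1) + F (q + S p') * F p').
  { rewrite <- F_add. f_equal; lia. }
  rewrite A3, A2, A1.
  replace (S (S p')) with (p' + 2)%nat by lia.
  replace (p' + 2)%nat with (S (S p')) in * by lia.
  replace (p' + 1)%nat with (S p') in * by lia.
  rewrite F_SS in *.
  set (x := F q) in *. set (y := F (q+1)%nat) in *.
  set (a0 := F p') in *. set (a1 := F (S p')) in *.
  assert (E : (y * (a1 + a0) + x * a1) * a1 + (y * a1 + x * a0) * a0 + x -
  (a0 + (a1 + a0)) * (y * a1 + x * a0) = x * (1 - ((a1 + a0) * a0 - a1 ^ 2))) by ring.
  rewrite C in E. lia.
Qed.

Section Core.
Variable R' : nat.
Let R := S R'.
Let G (k : nat) := F (2 * R * k).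
Let e := pw R.
Let m := 5 * F R ^ 2.
Let L := F (2 * R - 1) + F (2 * R + 1).

Lemma L_mod : L = m + 2 * e.
Proof.
  unfold L, m, e, R.
  pose proof (cassini R') as C.
  replace (2 * S R' - 1)%nat with (R' + R' + 1)%nat by lia.
  replace (2 * S R' + 1)%nat with (S R' + S R' + 1)%nat by lia.
  rewrite !F_add.
  replace (R' + 1)%nat with (S R') in * by lia.
  replace (R' + 2)%nat with (S (S R')) in * by lia.
  replace (S R' + 1)%nat with (S (S R')) in * by lia.
  rewrite F_SS in *. nia.
Qed.

Lemma G_rec k : G (S (S k)) = L * G (S k) - G k.
Proof.
  unfold G, L.
  pose proof (step (2 * R * k) (2 * R - 1)) as H.
  replace (S (2 * R - 1)) with (2 * R)%nat in H by (unfold R; lia).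
  replace (S (2 * R)) with (2 * R + 1)%nat in H by lia.
  replace (2 * R - 1 + 1)%nat with (R + R)%nat in H by (unfold R; lia).
  specialize (H (pw_double R)).
  replace (2 * R * S (S k))%nat with (2 * R * k + 2 * (2 * R))%nat by lia.
  replace (2 * R * S k)%nat with (2 * R * k + 2 * R)%nat by lia.
  lia.
Qed.

Lemma G_cong k :
  (m | G k - Z.of_nat k * pw (R * (k + 1)) * G 1) /\
  (m | G (S k) - Z.of_nat (S k) * pw (R * (S k + 1)) * G 1).
Proof.
  induction k as [|k [IH0 IH1]].
  - split.
    + unfold G. rewrite Nat.mul_0_r. simpl. exists 0. ring.
    + replace (R * (1 + 1))%nat with (R + R)%nat by lia. rewrite pw_double.
      change (Z.of_nat 1) with 1. exists 0. ring.
  - split; [exact IH1|].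
    set (s := pw (R * (k + 1))) in *.
    assert (Hs1 : pw (R * (S k + 1)) = s * e).
    { unfold s, e. rewrite <- pw_add. f_equal. lia. }
    assert (Hs2 : pw (R * (S (S k) + 1)) = s).
    { unfold s. replace (R * (S (S k) + 1))%nat with (R * (k+1) + (R + R))%nat by lia.
      rewrite pw_add, pw_double. ring. }
    rewrite Hs1 in IH1. rewrite Hs2. rewrite G_rec.
    pose proof (pw_sq R) as Hee. fold e in Hee.
    assert (Eq : L * G (S k) - G k - Z.of_nat (S (S k)) * s * G 1 =
      L * (G (S k) - Z.of_nat (S k) * (s * e) * G 1)
      - (G k - Z.of_nat k * s * G 1)
      + (L - 2 * e) * (Z.of_nat (S k) * s * e * G 1)
      + 2 * Z.of_nat (S k) * s * G 1 * (e * e - 1)).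
    { rewrite !Nat2Z.inj_succ. ring. }
    rewrite Eq, Hee, L_mod.
    replace (m + 2 * e - 2 * e) with m by ring.
    replace (1 - 1) with 0 by ring. rewrite Z.mul_0_r, Z.add_0_r.
    apply Z.divide_add_r; [apply Z.divide_sub_r|].
    + apply Z.divide_mul_r; exact IH1.
    + exact IH0.
    + apply Z.divide_mul_l, Z.divide_refl.
Qed.

Lemma core N :
  (m | - e * G (S N) + pw (R * (N + 1)) * G 1 + G N).
Proof.
  destruct (G_cong N) as [H0 H1].
  set (s := pw (R * (N + 1))) in *.
  assert (Hs1 : pw (R * (S N + 1)) = s * e).
  { unfold s, e. rewrite <- pw_add. f_equal. lia. }
  rewrite Hs1 in H1.
  pose proof (pw_sq R) as Hee. fold e in Hee.
  assert (Eq : - e * G (S N) + s * G 1 + G N =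
     - e * (G (S N) - Z.of_nat (S N) * (s * e) * G 1)
     + (G N - Z.of_nat N * s * G 1)
     + Z.of_nat (S N) * s * G 1 * (1 - e * e)).
  { rewrite !Nat2Z.inj_succ. ring. }
  rewrite Eq, Hee. replace (1 - 1) with 0 by ring. rewrite Z.mul_0_r, Z.add_0_r.
  apply Z.divide_add_r; [apply Z.divide_mul_r; exact H1| exact H0].
Qed.

End Core.

Lemma sgn_succ x : sgn_pow (x + 1) = - sgn_pow x.
Proof. unfold sgn_pow. rewrite Z.even_add. simpl. destruct (Z.even x); reflexivity. Qed.

Lemma sgn_nat k : sgn_pow (Z.of_nat k) = pw k.
Proof.
  induction k as [|k IH]. reflexivity.
  rewrite Nat2Z.inj_succ, <- Z.add_1_r, sgn_succ, pw_S, IH. reflexivity.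
Qed.

Lemma sgn_opp x : sgn_pow (- x) = sgn_pow x.
Proof. unfold sgn_pow. rewrite Z.even_opp. reflexivity. Qed.

Lemma sgn_sq x : sgn_pow x * sgn_pow x = 1.
Proof. unfold sgn_pow. destruct (Z.even x); reflexivity. Qed.

Lemma fib_nat_eq k : fib (Z.of_nat k) = F k.
Proof. unfold fib. destruct (Z.leb_spec 0 (Z.of_nat k)); [|lia]. rewrite Nat2Z.id. reflexivity. Qed.

Lemma fib_neg_even k : fib (- Z.of_nat (2 * k)) = - F (2 * k).
Proof.
  destruct k as [|k]. reflexivity.
  unfold fib. destruct (Z.leb_spec 0 (- Z.of_nat (2 * S k))); [lia|].
  rewrite Z.opp_involutive, Nat2Z.id.
  replace (Z.of_nat (2 * S k) - 1) with (2 * Z.of_nat k + 1) by lia.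
  rewrite sgn_succ. unfold sgn_pow at 1. rewrite Z.even_mul. change (Z.even 2) with true. rewrite Bool.orb_true_l. ring.
Qed.

Lemma fib_neg k : fib (- Z.of_nat k) ^ 2 = F k ^ 2.
Proof.
  destruct k as [|k]. reflexivity.
  unfold fib. destruct (Z.leb_spec 0 (- Z.of_nat (S k))); [lia|].
  rewrite Z.opp_involutive, Nat2Z.id.
  pose proof (sgn_sq (Z.of_nat (S k) - 1)). nia.
Qed.

Theorem mainTheorem7 (r n : Z) (hr : r <> 0) (hn : 0 < n) :
  (5 * fib r ^ 2 |
     sgn_pow (r + 1) * fib (2 * r * (n + 1))
     + sgn_pow (r * (n + 1)) * fib (2 * r)
     + fib (2 * r * n)).
Proof.
  destruct (Z_of_nat_complete n) as [N ->]; [lia|].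
  assert (HR : exists R', r = Z.of_nat (S R') \/ r = - Z.of_nat (S R')).
  { destruct (Z.lt_total r 0) as [H|[H|H]]; [|lia|].
    - exists (Z.to_nat (- r) - 1)%nat. right. lia.
    - exists (Z.to_nat r - 1)%nat. left. lia. }
  destruct HR as [R' [-> | ->]].
  - pose proof (core R' N) as H. cbv zeta in H.
    replace (2 * Z.of_nat (S R') * (Z.of_nat N + 1)) with (Z.of_nat (2 * S R' * S N)) by lia.
    replace (2 * Z.of_nat (S R') * Z.of_nat N) with (Z.of_nat (2 * S R' * N)) by lia.
    replace (2 * Z.of_nat (S R')) with (Z.of_nat (2 * S R' * 1)) by lia.
    replace (Z.of_nat (S R') * (Z.of_nat N + 1)) with (Z.of_nat (S R' * (N + 1))) by lia.
    rewrite !fib_nat_eq, sgn_succ, !sgn_nat. exact H.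
  - pose proof (core R' N) as H. cbv zeta in H.
    rewrite <- fib_neg in H.
    replace (2 * - Z.of_nat (S R') * (Z.of_nat N + 1)) with (- Z.of_nat (2 * (S R' * S N))) by lia.
    replace (2 * - Z.of_nat (S R') * Z.of_nat N) with (- Z.of_nat (2 * (S R' * N))) by lia.
    replace (2 * - Z.of_nat (S R')) with (- Z.of_nat (2 * (S R' * 1))) by lia.
    replace (- Z.of_nat (S R') * (Z.of_nat N + 1)) with (- Z.of_nat (S R' * (N + 1))) by lia.
    rewrite !fib_neg_even, sgn_opp, sgn_nat.
    replace (- Z.of_nat (S R') + 1) with (- Z.of_nat R') by lia.
    rewrite sgn_opp, sgn_nat.
    rewrite !Nat.mul_assoc.
    apply Z.divide_opp_r.
    replace (pw R') with (- pw (S R')) by (rewrite pw_S; ring).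
    replace (- (- pw (S R') * - F (2 * S R' * S N) + pw (S R' * (N + 1)) * - F (2 * S R' * 1) +
     - F (2 * S R' * N))) with
      (- pw (S R') * F (2 * S R' * S N) + pw (S R' * (N + 1)) * F (2 * S R' * 1) + F (2 * S R' * N)) by ring.
    exact H.
Qed.
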